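(* Let $w(t)$ be a stationary multi-state telegraph-like noise taking values in a finite set $\{w_1,\dots,w_M\}$ of real numbers, with transition-rate matrix $\Gamma$ (so that $\sum_j \Gamma_{jk}=0$ for every $k$) and stationary initial distribution $y(0)$ (a probability vector with $\Gamma y(0)=0$). Let $W=\mathrm{diag}(w_1,\dots,w_M)$. For a dynamical decoupling (DD) sequence of $N\ge 1$ ideal $\pi$ pulses applied at times $\alpha_1 t<\alpha_2 t<\dots<\alpha_N t$ in $(0,t)$, with $0<\alpha_1<\dots<\alpha_N<1$, set $\alpha_0=0$, $\alpha_{N+1}=1$, $a_n=\alpha_n-\alpha_{n-1}$ for $n=1,\dots,N+1$, and require the echo condition $a_1-a_2+a_3-\cdots+(-1)^N a_{N+1}=0$. The qubit coherence (decoherence function) is $$\langle x(t)\rangle=\sum_{j}\Big[e^{[\Gamma+(-1)^N iW]a_{N+1}t}\cdots e^{[\Gamma-iW]a_2 t}\,e^{[\Gamma+iW]a_1 t}\,y(0)\Big]_j .$$ Then, in the short-time limit $t\to 0$, among all DD sequences with the same number $N$ of pulses satisfying the echo condition, the Carr–Purcell–Meiboom–Gill (CPMG) sequence, i.e. $\alpha_n=\frac{2n-1}{2N}$ for $n=1,\dots,N$, is the global minimizer of the decoherence: the coefficient of the leading (third-order) term $t^3$ in the Taylor expansion of $1-\langle x(t)\rangle$ about $t=0$ has minimal absolute value at the CPMG timing.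
   Context: Physical setting: a qubit with Hamiltonian $H=S_z w(t)$ in a random classical field $w(t)$; $x=S_x+iS_y$ is the transverse polarization and $\langle x(t)\rangle$ its ensemble average. The telegraph-like noise jumps randomly among the values $w_j$ with probabilities $Y_j(t)$ obeying $\frac{d}{dt}Y_j=\sum_{j'}\Gamma_{jj'}Y_{j'}$. Ideal instantaneous $\pi$ pulses flip the spin between $+z$ and $-z$, equivalently flip the sign of the field, which yields the stated product-of-exponentials formula for $\langle x(t)\rangle$. *)

(* Defs.v *)
From mathcomp Require Import all_boot all_algebra complex.
From mathcomp Require Import reals.
Set Implicit Arguments. Unset Strict Implicit. Unset Printing Implicit Defensive.
Import GRing.Theory Num.Theory.
Local Open Scope ring_scope.

(* Formal power series in the variable t with coefficients in a ring A:
   k |-> coefficient of t^k. *)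
Definition fps (A : Type) := nat -> A.

Definition fps_mul (A : pzRingType) (f g : fps A) : fps A :=
  fun k => \sum_(i < k.+1) f i * g (k - i)%N.

Definition fps_one (A : pzRingType) : fps A := fun k => if k == 0%N then 1 else 0.

Definition mexp_series (C : fieldType) (m : nat) (B : 'M[C]_m) : fps 'M[C]_m :=
  fun k => ((k`!)%:R)^-1 *: (B ^+ k).

Section Decoherence.
Variables (R : realType) (M : nat).

Definition cplxM (A : 'M[R]_M) : 'M[R[i]]_M := map_mx (fun r => (r%:C)%C) A.
Definition cplxV (v : 'cV[R]_M) : 'cV[R[i]]_M := map_mx (fun r => (r%:C)%C) v.

Definition Wmat (w : 'I_M -> R) : 'M[R]_M := diag_mx (\row_j w j).

Definition interval (alpha : nat -> R) (n : nat) : R := alpha n - alpha n.-1.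

Definition seg_gen (Gamma : 'M[R]_M) (w : 'I_M -> R) (alpha : nat -> R) (n : nat)
  : 'M[R[i]]_M :=
  ((interval alpha n)%:C)%C *:
    (cplxM Gamma + ((-1) ^+ n.-1 * 'i%C) *: cplxM (Wmat w)).

Fixpoint prop_series (Gamma : 'M[R]_M) (w : 'I_M -> R) (alpha : nat -> R) (n : nat)
  : fps 'M[R[i]]_M :=
  match n with
  | 0 => fps_one _
  | n'.+1 => fps_mul (mexp_series (seg_gen Gamma w alpha n))
                     (prop_series Gamma w alpha n')
  end.

Definition coherence_series (Gamma : 'M[R]_M) (w : 'I_M -> R) (y0 : 'cV[R]_M)
  (N : nat) (alpha : nat -> R) : fps R[i] :=
  fun k => \sum_(j < M) ((prop_series Gamma w alpha N.+1 k) *m cplxV y0) j 0.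

Definition decoherence_series (Gamma : 'M[R]_M) (w : 'I_M -> R) (y0 : 'cV[R]_M)
  (N : nat) (alpha : nat -> R) : fps R[i] :=
  fun k => (if k == 0%N then 1 else 0) - coherence_series Gamma w y0 N alpha k.

End Decoherence.

Definition DD_timing (R : realType) (N : nat) (alpha : nat -> R) : Prop :=
  [/\ alpha 0%N = 0, alpha N.+1 = 1,
      (forall n, (n <= N)%N -> alpha n < alpha n.+1) &
      \sum_(1 <= n < N.+2) (-1) ^+ n.-1 * interval alpha n = 0].

Definition CPMG (R : realType) (N : nat) : nat -> R :=
  fun n => if n == 0%N then 0
           else if (n <= N)%N then ((2 * n - 1)%N)%:R / ((2 * N)%N)%:R else 1.

(* Transition-rate matrix (column convention dY/dt = Gamma Y):
   nonnegative off-diagonal rates, columns summing to zero. *)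
Definition rate_matrix (R : realType) (M : nat) (Gamma : 'M[R]_M) : Prop :=
  (forall j k : 'I_M, j != k -> 0 <= Gamma j k) /\
  (forall k : 'I_M, \sum_(j < M) Gamma j k = 0).

Definition stationary_distribution (R : realType) (M : nat) (Gamma : 'M[R]_M)
  (y0 : 'cV[R]_M) : Prop :=
  (forall j, 0 <= y0 j 0) /\ \sum_(j < M) y0 j 0 = 1 /\ Gamma *m y0 = 0.

Arguments DD_timing {R} N alpha.
Arguments CPMG R N n.

(* Main.v *)
Require Import Defs.
From mathcomp Require Import all_boot all_algebra complex.
From mathcomp Require Import reals.
From mathcomp Require Import order ring lra.
Set Implicit Arguments. Unset Strict Implicit. Unset Printing Implicit Defensive.
Import Order.TTheory GRing.Theory Num.Theory.
Local Open Scope ring_scope.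


Section Series.
Variables (R : realType) (M : nat) (Gamma : 'M[R]_M) (w : 'I_M -> R) (y0 : 'cV[R]_M) (alpha : nat -> R).
Local Notation ivl := (Defs.interval alpha).

Local Notation C := (R[i]).
Local Notation iota := (real_complex R).
Definition bb (n : nat) : R := (-1) ^+ n.-1 * ivl n.
Definition FF (n : nat) : R := \sum_(1 <= k < n.+1) bb k.
Definition GG (n : nat) : R := \sum_(1 <= k < n.+1) ivl k * (FF k.-1 + bb k / 2).
Definition SS (n : nat) : R := \sum_(1 <= k < n.+1)
   (bb k * GG k.-1 + ivl k * bb k * FF k.-1 / 2 + ivl k * bb k ^+ 2 / 6).
Definition QQ (n : nat) : R := \sum_(1 <= k < n.+1)
   (ivl k * (FF k.-1 ^+ 2 + FF k.-1 * FF k + FF k ^+ 2) / 3).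

Lemma sum_rec (f : nat -> R) n : \sum_(1 <= k < n.+2) f k = \sum_(1 <= k < n.+1) f k + f n.+1.
Proof. by rewrite big_nat_recr. Qed.
Lemma sum_0 (f : nat -> R) : \sum_(1 <= k < 1) f k = 0.
Proof. by rewrite big_geq. Qed.

Lemma SQ n : SS n + QQ n = FF n * GG n.
Proof.
elim: n => [|n IH]; first by rewrite /SS /QQ /FF /GG !sum_0 mul0r addr0.
have eF : FF n.+1 = FF n + bb n.+1 by rewrite /FF sum_rec.
have eG : GG n.+1 = GG n + ivl n.+1 * (FF n + bb n.+1 / 2) by rewrite /GG sum_rec.
rewrite /SS /QQ !sum_rec -/(SS n) -/(QQ n) /= eF eG.
rewrite (_ : forall x y z t : R, x + y + (z + t) = (x + z) + (y + t)); last by move=> *; ring.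
rewrite IH. by field.
Qed.

Local Notation Gm := (cplxM Gamma).
Local Notation Wm := (cplxM (Wmat w)).
Local Notation yv := (cplxV y0).
Local Notation u := (const_mx 1 : 'rV[C]_M).
Local Notation B n := (seg_gen Gamma w alpha n).
Local Notation P := (prop_series Gamma w alpha).

Lemma P_rec n k : P n.+1 k = \sum_(i < k.+1) mexp_series (B n.+1) i * P n (k - i)%N.
Proof. by []. Qed.

Lemma mexp0 (A : 'M[C]_M) : mexp_series A 0 = 1.
Proof. by rewrite /mexp_series fact0 invr1 scale1r expr0. Qed.
Lemma mexp1 (A : 'M[C]_M) : mexp_series A 1 = A.
Proof. by rewrite /mexp_series factS fact0 muln1 invr1 scale1r expr1. Qed.

Lemma P0 n : P n 0 = 1.
Proof.
elim: n => [|n IH] //; rewrite P_rec big_ord1 /= IH mexp0 mulr1 //.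
Qed.

Lemma P1 n : P n.+1 1 = P n 1 + B n.+1.
Proof. by rewrite P_rec !big_ord_recl big_ord0 /= mexp0 mexp1 P0 mul1r mulr1 addr0. Qed.

Lemma mexp2 (A : 'M[C]_M) : mexp_series A 2 = (2%:R^-1 : C) *: (A * A).
Proof. by rewrite /mexp_series expr2. Qed.
Lemma mexp3 (A : 'M[C]_M) : mexp_series A 3 = (6%:R^-1 : C) *: (A * (A * A)).
Proof. by rewrite /mexp_series -expr2 -exprS. Qed.
Lemma P2g n : P n.+1 2 = mexp_series (B n.+1) 0 * P n 2 + mexp_series (B n.+1) 1 * P n 1
  + mexp_series (B n.+1) 2 * P n 0.
Proof. by rewrite P_rec !big_ord_recl big_ord0 addr0 addrA. Qed.
Lemma P3g n : P n.+1 3 = mexp_series (B n.+1) 0 * P n 3 + mexp_series (B n.+1) 1 * P n 2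
  + mexp_series (B n.+1) 2 * P n 1 + mexp_series (B n.+1) 3 * P n 0.
Proof. by rewrite P_rec !big_ord_recl big_ord0 addr0 !addrA. Qed.
Lemma P2 n : P n.+1 2 = P n 2 + B n.+1 * P n 1 + (2%:R^-1 : C) *: (B n.+1 * B n.+1).
Proof. by rewrite P2g mexp0 mexp1 mexp2 P0 mul1r mulr1. Qed.

Lemma P3 n : P n.+1 3 = P n 3 + B n.+1 * P n 2 + ((2%:R^-1 : C) *: (B n.+1 * B n.+1)) * P n 1
   + (6%:R^-1 : C) *: (B n.+1 * (B n.+1 * B n.+1)).
Proof. by rewrite P3g mexp0 mexp1 mexp2 mexp3 P0 mul1r mulr1. Qed.

Local Notation Wy := (Wm *m yv).
Local Notation uW := (u *m Wm).
Local Notation A1 := (Gm *m Wy).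
Local Notation A2 := (Wm *m Wy).
Local Notation K := (uW *m A1).
Local Notation L := (uW *m A2).
Definition lc (x y : C) := x *: A1 + y *: A2.
Definition lc1 (x y : C) := x *: K + y *: L.

Lemma lcD_gen (V : lmodType C) (p q : V) x y x' y' :
  (x *: p + y *: q) + (x' *: p + y' *: q) = (x + x') *: p + (y + y') *: q.
Proof. by rewrite !scalerDl addrACA. Qed.
Lemma lcZ_gen (V : lmodType C) (p q : V) c x y :
  c *: (x *: p + y *: q) = (c * x) *: p + (c * y) *: q.
Proof. by rewrite scalerDr !scalerA. Qed.
Lemma lcD x y x' y' : lc x y + lc x' y' = lc (x + x') (y + y').
Proof. exact: lcD_gen. Qed.
Lemma lcZ c x y : c *: lc x y = lc (c * x) (c * y).
Proof. exact: lcZ_gen. Qed.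
Lemma lc1D x y x' y' : lc1 x y + lc1 x' y' = lc1 (x + x') (y + y').
Proof. exact: lcD_gen. Qed.
Lemma lc1Z c x y : c *: lc1 x y = lc1 (c * x) (c * y).
Proof. exact: lcZ_gen. Qed.
Lemma uW_lc x y : uW *m lc x y = lc1 x y.
Proof. by rewrite /lc /lc1 mulmxDr -!scalemxAr. Qed.

Lemma iota_bb n : iota (bb n) = (-1) ^+ n.-1 * iota (ivl n).
Proof. by rewrite /bb rmorphM rmorphXn rmorphN1. Qed.

Hypothesis hu : u *m Gm = 0.
Hypothesis hy : Gm *m yv = 0.

Lemma uB n : u *m B n = ('i%C * iota (bb n)) *: uW.
Proof.
rewrite /seg_gen -!scalemxAr mulmxDr -scalemxAr hu add0r scalerA iota_bb; congr (_ *: _).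
by ring.
Qed.
Lemma By n : B n *m yv = ('i%C * iota (bb n)) *: Wy.
Proof.
rewrite /seg_gen -!scalemxAl mulmxDl hy -scalemxAl add0r scalerA iota_bb; congr (_ *: _).
by ring.
Qed.
Lemma BWy n : B n *m Wy = lc (iota (ivl n)) ('i%C * iota (bb n)).
Proof.
rewrite /seg_gen -scalemxAl mulmxDl -scalemxAl scalerDr scalerA iota_bb /lc; congr (_ + _ *: _).
by ring.
Qed.

Lemma FF_rec n : FF n.+1 = FF n + bb n.+1.
Proof. by rewrite /FF sum_rec. Qed.
Lemma GG_rec n : GG n.+1 = GG n + ivl n.+1 * (FF n + bb n.+1 / 2).
Proof. by rewrite /GG sum_rec. Qed.
Lemma SS_rec n : SS n.+1 = SS n + (bb n.+1 * GG n + ivl n.+1 * bb n.+1 * FF n / 2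
   + ivl n.+1 * bb n.+1 ^+ 2 / 6).
Proof. by rewrite /SS sum_rec. Qed.

Lemma v1 n : P n 1 *m yv = ('i%C * iota (FF n)) *: Wy.
Proof.
elim: n => [|n IH].
  by rewrite /FF sum_0 rmorph0 mulr0 scale0r /= /fps_one /= mul0mx.
by rewrite P1 mulmxDl IH By -scalerDl FF_rec rmorphD mulrDr.
Qed.

Lemma sqi : ('i%C : C) ^+ 2 = -1.
Proof. exact: sqr_i. Qed.

Lemma hi (x y : C) : 'i%C * x * ('i%C * y) = - (x * y).
Proof. by rewrite mulrACA -expr2 sqi mulN1r. Qed.

Lemma v2 n : P n 2 *m yv = lc ('i%C * iota (GG n)) (- iota (FF n ^+ 2 / 2)).
Proof.
elim: n => [|n IH].
  have -> : P 0 2 = 0 by [].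
  rewrite mul0mx /lc /GG /FF !sum_0.
  by rewrite rmorph0 mulr0 scale0r add0r expr2 !mul0r rmorph0 oppr0 scale0r.
rewrite P2 -mulmxE !mulmxDl IH -mulmxA v1 -scalemxAr BWy lcZ.
rewrite -scalemxAl -mulmxA By -scalemxAr BWy !lcZ !lcD GG_rec FF_rec.
move: (ivl n.+1) (bb n.+1) (FF n) (GG n) => a b f g.
rewrite !hi; congr lc; rewrite !(rmorphD, rmorphM, rmorphXn, rmorphN, fmorphV, rmorph_nat); by field.
Qed.

Lemma c3 n : u *m (P n 3 *m yv) = lc1 (- iota (SS n)) (- ('i%C * iota (FF n ^+ 3 / 6))).
Proof.
elim: n => [|n IH].
  have -> : P 0 3 = 0 by [].
  rewrite mul0mx mulmx0 /lc1 /SS /FF !sum_0.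
  by rewrite rmorph0 oppr0 scale0r add0r expr0n !mul0r rmorph0 mulr0 oppr0 scale0r.
rewrite P3 -mulmxE !mulmxDl !mulmxDr IH.
have huB := uB n.+1; have hBW := BWy n.+1; have hBy := By n.+1.
move: (B n.+1) huB hBW hBy => Bn huB hBW hBy.
have T2 : u *m (Bn *m P n 2 *m yv) =
   ('i%C * iota (bb n.+1)) *: lc1 ('i%C * iota (GG n)) (- iota (FF n ^+ 2 / 2)).
  by rewrite -mulmxA v2 mulmxA huB -scalemxAl uW_lc.
have T3 : u *m (2%:R^-1 *: (Bn *m Bn) *m P n 1 *m yv) =
   2%:R^-1 *: (('i%C * iota (bb n.+1)) *: (('i%C * iota (FF n)) *:
      lc1 (iota (ivl n.+1)) ('i%C * iota (bb n.+1)))).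
  by rewrite -!scalemxAl -scalemxAr -!mulmxA v1 (mulmxA u Bn) huB -scalemxAl -!scalemxAr hBW uW_lc.
have T4 : u *m (6%:R^-1 *: (Bn *m (Bn *m Bn)) *m yv) =
   6%:R^-1 *: (('i%C * iota (bb n.+1)) *: (('i%C * iota (bb n.+1)) *:
      lc1 (iota (ivl n.+1)) ('i%C * iota (bb n.+1)))).
  by rewrite -!scalemxAl -scalemxAr -!mulmxA hBy (mulmxA u Bn) huB -scalemxAl -!scalemxAr hBW uW_lc.
rewrite T2 T3 T4 !lc1Z !lc1D SS_rec FF_rec.
move: (ivl n.+1) (bb n.+1) (FF n) (GG n) => a b f g.
congr lc1; rewrite !(rmorphD, rmorphM, rmorphXn, rmorphN, fmorphV, rmorph_nat); by field: sqi.
Qed.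
End Series.


Section Ineq.
Variables (R : realType) (N : nat) (alpha : nat -> R).
Local Notation ivl := (Defs.interval alpha).
Local Notation F := (FF alpha).
Local Notation Q := (QQ alpha).

Lemma ivl_sum : \sum_(1 <= k < N.+2) ivl k = alpha N.+1 - alpha 0.
Proof.
rewrite big_add1 /=. rewrite (eq_bigr (fun k => alpha k.+1 - alpha k)) //.
by rewrite telescope_sumr.
Qed.

Lemma bb_sq k : bb alpha k ^+ 2 = ivl k ^+ 2.
Proof. by rewrite /bb exprMn sqrr_sign mul1r. Qed.

Lemma term_low k (m : R) : (0 < k)%N -> 0 <= m -> 0 < ivl k ->
  (3 * m ^+ 2 * ivl k - 2 * m ^+ 3) / 12 <=
  ivl k * (F k.-1 ^+ 2 + F k.-1 * F k + F k ^+ 2) / 3.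
Proof.
case: k => [//|k] _ hm ha /=.
have hb := bb_sq k.+1.
rewrite /FF sum_rec -/(FF alpha k).
move: (F k) (bb alpha k.+1) (ivl k.+1) ha hb => f b a ha hb.
have h1 : 0 <= (a - m) ^+ 2 * (a + 2 * m) by apply: mulr_ge0; [exact: sqr_ge0|lra].
have h2 : 0 <= a * (f + b / 2) ^+ 2 by apply: mulr_ge0; [lra|exact: sqr_ge0].
nra.
Qed.
Lemma F0 : F 0 = 0.
Proof. by rewrite /FF big_geq. Qed.

Lemma Q_low (hN : (0 < N)%N) (hpos : forall k, (0 < k <= N.+1)%N -> 0 < ivl k)
  (h0 : alpha 0 = 0) (h1 : alpha N.+1 = 1) (hF : F N.+1 = 0) :
  (N%:R^-1) ^+ 2 / 12 <= Q N.+1.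
Proof.
set m : R := N%:R^-1.
have hNr : (N%:R : R) != 0 by rewrite pnatr_eq0 -lt0n.
have hm : m * N%:R = 1 by rewrite /m mulVf.
have hm0 : 0 <= m by rewrite /m invr_ge0 ler0n.
have hsum := ivl_sum; rewrite h0 h1 subr0 in hsum.
rewrite (@big_ltn _ _ _ 1 N.+2) // big_nat_recr //= in hsum.
rewrite /QQ (@big_ltn _ _ _ 1 N.+2) // big_nat_recr //=.
set mid := \sum_(2 <= i < N.+1) _.
set amid := \sum_(2 <= i < N.+1) _ in hsum.
have hmid : (m ^+ 2 / 4) * amid - (m ^+ 3 / 6) * (N.-1)%:R <= mid.
  rewrite /mid /amid mulr_sumr.
  have -> : (N.-1)%:R = \sum_(2 <= i < N.+1) (1 : R).
    by rewrite sumr_const_nat subSS subn1.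
  rewrite mulr_sumr -sumrB; apply: ler_sum_nat => k /andP [hk1 hk2].
  have hk0 : (0 < k)%N by apply: leq_trans hk1.
  have hk3 : (0 < k <= N.+1)%N by rewrite hk0 ltnW.
  have h := term_low hk0 hm0 (hpos k hk3).
  apply: le_trans h; rewrite mulr1; lra.
have ha1 := hpos 1 isT.
have haN := hpos N.+1 (leqnn _).
have ht1 : ivl 1 * (F 0 ^+ 2 + F 0 * F 1 + F 1 ^+ 2) / 3 = ivl 1 ^+ 3 / 3.
  rewrite F0 /FF sum_rec -/(FF alpha 0) F0 add0r expr0n mul0r !add0r bb_sq; ring.
have htN : ivl N.+1 * (F N ^+ 2 + F N * F N.+1 + F N.+1 ^+ 2) / 3 = ivl N.+1 ^+ 3 / 3.
  have eF : F N = - bb alpha N.+1 by move: hF; rewrite /FF sum_rec -/(FF alpha N); lra.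
  rewrite hF eF mulr0 expr0n /= !addr0 sqrrN bb_sq; ring.
rewrite ht1 htN.
move: (ivl 1) (ivl N.+1) ha1 haN hsum => x y hx hy hs.
have hN1 : (N.-1)%:R = N%:R - 1 :> R by case: N hN {hNr hm m hmid hm0} => // n _; rewrite /= mulrSr addrK.
rewrite hN1 in hmid.
have hm2 : m ^+ 3 * N%:R = m ^+ 2 by rewrite exprSr -mulrA hm mulr1.
have e1 : 0 <= (x - y) ^+ 2 * (x + y) by apply: mulr_ge0; [exact: sqr_ge0|lra].
have e2 : 0 <= (x + y - m) ^+ 2 * (x + y + 2 * m) by apply: mulr_ge0; [exact: sqr_ge0|lra].
nra.
Qed.
End Ineq.


Section CP.
Variables (R : realType) (N : nat).
Hypothesis hN : (0 < N)%N.
Local Notation c := (CPMG R N).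
Local Notation ivl := (Defs.interval c).
Local Notation F := (FF c).
Local Notation Q := (QQ c).
Local Notation m := ((N%:R : R)^-1).

Lemma hNr : (N%:R : R) != 0.
Proof. by move: hN; rewrite pnatr_eq0 lt0n. Qed.

Lemma cp_val k : (0 < k <= N)%N -> c k = (k%:R * 2 - 1) / (N%:R * 2).
Proof.
case/andP=> hk hkN.
rewrite /CPMG (gtn_eqF hk) hkN natrB ?natrM; last by rewrite muln_gt0.
by rewrite [_ * k%:R]mulrC [_ * N%:R]mulrC.
Qed.

Lemma cp0 : c 0 = 0. Proof. by []. Qed.
Lemma cpN1 : c N.+1 = 1. Proof. by rewrite /CPMG /= ltnn. Qed.

Lemma ivl1 : ivl 1 = m / 2.
Proof.
rewrite /Defs.interval cp_val ?hN // cp0 subr0.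
have := hNr; move: (N%:R : R) => n hn. by field; rewrite hn.
Qed.

Lemma ivl_mid k : (1 < k <= N)%N -> ivl k = m.
Proof.
case: k => [//|j] /andP [h1 h2].
rewrite /Defs.interval cp_val ?h2 // cp_val /=; last by apply/andP; split; [exact: h1 | exact: ltnW].
rewrite -addn1 natrD.
have := hNr; move: (N%:R : R) (j%:R : R) => n i hn. by field; rewrite hn.
Qed.

Lemma ivl_last : ivl N.+1 = m / 2.
Proof.
rewrite /Defs.interval cpN1 /= cp_val ?hN ?leqnn //.
have := hNr; move: (N%:R : R) => n hn. by field; rewrite hn.
Qed.
Lemma Fz : F 0 = 0.
Proof. by rewrite /FF big_geq. Qed.

Lemma m_gt0 : 0 < m.
Proof. by rewrite invr_gt0 ltr0n. Qed.

Lemma ivl_pos k : (0 < k <= N.+1)%N -> 0 < ivl k.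
Proof.
have := m_gt0 => hm.
case/andP=> h1 h2.
case: (ltnP 1 k) => hk.
  rewrite leq_eqVlt in h2; case/orP: h2 => [/eqP [->]|h2].
    by rewrite ivl_last; lra.
  by rewrite ivl_mid // hk.
have -> : k = 1%N by apply/eqP; rewrite eqn_leq hk.
by rewrite ivl1; lra.
Qed.

Lemma Q_rec k : Q k.+1 = Q k + ivl k.+1 * (F k ^+ 2 + F k * F k.+1 + F k.+1 ^+ 2) / 3.
Proof. by rewrite /QQ sum_rec. Qed.

Lemma Fc k : (0 < k <= N)%N -> F k = (-1) ^+ k.-1 * (m / 2).
Proof.
elim: k => [//|k IH] /andP [_ hk].
rewrite FF_rec /bb /=.
case: k IH hk => [|j] IH hk.
  by rewrite Fz ivl1 add0r.
rewrite IH ?(ltnW hk) // ivl_mid ?hk // exprS /=.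
have := hNr; move: (N%:R : R) ((-1) ^+ j : R) => n s hn. by field; rewrite hn.
Qed.

Lemma Fc_last : F N.+1 = 0.
Proof.
rewrite FF_rec Fc ?hN ?leqnn // /bb /= ivl_last.
case: N hN hNr => [//|j] _ hn0 /=; rewrite exprS.
move: (j.+1%:R : R) ((-1) ^+ j : R) hn0 => n s hn. by field; rewrite hn.
Qed.

Lemma Qc k : (0 < k <= N)%N -> Q k = m ^+ 3 / 24 + (k.-1)%:R * m ^+ 3 / 12.
Proof.
elim: k => [//|k IH] /andP [_ hk].
rewrite Q_rec.
case: k IH hk => [|j] IH hk.
  rewrite /QQ big_geq // add0r Fz Fc //= ivl1 expr0 mul1r.
  have := hNr; move: (N%:R : R) => n hn. by field; rewrite hn.
rewrite IH ?(ltnW hk) // ivl_mid ?hk // !Fc ?hk ?(ltnW hk) //= [(j.+1)%:R]mulrSr.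
have hs := sqrr_sign R j.
rewrite [(-1) ^+ j.+1]exprS; have := hNr; move: ((-1) ^+ j : R) (j%:R : R) (N%:R : R) hs => s jj n hs hn.
have hs' : s * s = 1 by rewrite -expr2.
field: hs'; by rewrite hn.
Qed.

Lemma Q_last : Q N.+1 = m ^+ 2 / 12.
Proof.
rewrite Q_rec Fc_last Qc ?hN ?leqnn // Fc ?hN ?leqnn // ivl_last.
have hs := sqrr_sign R N.-1.
have hn := hNr.
have eN : (N.-1)%:R = (N%:R : R) - 1 by case: N hN {hn} => // n _; rewrite /= mulrSr addrK.
rewrite eN; move: ((-1) ^+ N.-1 : R) (N%:R : R) hs hn => s n hs hn.
have hs' : s * s = 1 by rewrite -expr2.
field: hs'; by rewrite hn.
Qed.

Lemma cp_DD : DD_timing N c.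
Proof.
split => //; first exact: cpN1.
  move=> n hn; rewrite -subr_gt0; exact: (ivl_pos (k := n.+1)).
exact: Fc_last.
Qed.
End CP.



Section Final.
Variables (R : realType) (M : nat) (Gamma : 'M[R]_M) (w : 'I_M -> R) (y0 : 'cV[R]_M) (N : nat).
Local Notation C := (R[i]).
Local Notation Gm := (cplxM Gamma).
Local Notation Wm := (cplxM (Wmat w)).
Local Notation yv := (cplxV y0).
Local Notation u := (const_mx 1 : 'rV[C]_M).

Lemma cplxM_E (A : 'M[R]_M) : cplxM A = map_mx (real_complex R) A.
Proof. by []. Qed.
Lemma cplxV_E (v : 'cV[R]_M) : cplxV v = map_mx (real_complex R) v.
Proof. by []. Qed.

Lemma hy_of : Gamma *m y0 = 0 -> Gm *m yv = 0.
Proof. by move=> h; rewrite cplxM_E cplxV_E -map_mxM h map_mx0. Qed.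

Lemma hu_of : (forall k : 'I_M, \sum_(j < M) Gamma j k = 0) -> u *m Gm = 0.
Proof.
move=> h; apply/matrixP => i k; rewrite !mxE.
rewrite (eq_bigr (fun j => real_complex R (Gamma j k))); last by move=> j _; rewrite !mxE mul1r.
by rewrite -rmorph_sum h rmorph0.
Qed.

Lemma sum_entry (X : 'cV[C]_M) : \sum_(j < M) X j 0 = (u *m X) 0 0.
Proof. by rewrite mxE; apply: eq_bigr => j _; rewrite mxE mul1r. Qed.

Lemma dec3 (alpha : nat -> R) : Gamma *m y0 = 0 -> (forall k : 'I_M, \sum_(j < M) Gamma j k = 0) ->
  FF alpha N.+1 = 0 ->
  decoherence_series Gamma w y0 N alpha 3 =
  - ((QQ alpha N.+1)%:C%C * ((u *m Wm) *m (Gm *m (Wm *m yv))) 0 0).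
Proof.
move=> hy hu hF.
rewrite /decoherence_series /coherence_series sum_entry.
rewrite (c3 w alpha (hu_of hu) (hy_of hy)) hF expr0n /= sub0r mul0r rmorph0 mulr0 oppr0.
rewrite /lc1 scale0r addr0 mxE.
have hS := SQ alpha N.+1; rewrite hF mul0r in hS.
have -> : SS alpha N.+1 = - QQ alpha N.+1 by lra.
by rewrite rmorphN opprK.
Qed.
End Final.

Unset Implicit Arguments.

Theorem theorem1 (R : realType) (M : nat) (Gamma : 'M[R]_M) (w : 'I_M -> R)
  (y0 : 'cV[R]_M) (N : nat) :
  (1 <= N)%N ->
  rate_matrix Gamma ->
  stationary_distribution Gamma y0 ->
  DD_timing N (CPMG R N) /\
  (forall alpha : nat -> R, DD_timing N alpha ->
     `| decoherence_series Gamma w y0 N (CPMG R N) 3 |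
       <= `| decoherence_series Gamma w y0 N alpha 3 |).
Proof.
move=> hN [_ hcol] [_ [_ hst]].
split; first exact: cp_DD.
move=> alpha [h0 h1 hinc hecho].
have hFa : FF alpha N.+1 = 0 by rewrite -hecho.
have hpos : forall k, (0 < k <= N.+1)%N -> 0 < Defs.interval alpha k.
  case=> [//|k] /andP [_ hk]; rewrite /Defs.interval subr_gt0; exact: hinc.
have hlow := Q_low hN hpos h0 h1 hFa.
rewrite !dec3 //; last exact: Fc_last.
rewrite !normrN !normrM Q_last //.
apply: ler_wpM2r; first exact: normr_ge0.
have hm : 0 <= (N%:R : R)^-1 ^+ 2 / 12 by apply: divr_ge0; [exact: sqr_ge0 | lra].
have hq : 0 <= QQ alpha N.+1 := le_trans hm hlow.
by rewrite !ger0_norm ?ler0c ?lecR.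
Qed.
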